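(* Let $F$ be a field of characteristic $2$ and let $q=\langle a_1,\dots,a_n\rangle$ be a totally singular quadratic form over $F$ with not all $a_i=0$. Let $L/F$ be a finite field extension, $\lambda\in L^*$ and $K=F(\lambda)$. If $\lambda\in G_L(q_L)$, then $K/F$ is separable or $L/K$ is inseparable.
   Context: $\langle a_1,\dots,a_n\rangle$ denotes $a_1x_1^2+\dots+a_nx_n^2$. $G_L(q_L)=\{c\in L^*: q_L\cong cq_L\}$ is the group of similarity factors of $q_L$. *)

(* Defs.v *)
From HB Require Import structures.
From mathcomp Require Import all_boot all_order all_algebra all_field.
Set Implicit Arguments. Unset Strict Implicit. Unset Printing Implicit Defensive.
Import GRing.Theory.
Local Open Scope ring_scope.

Definition qformL (F : fieldType) (L : fieldExtType F) (n : nat)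
  (a : 'I_n -> F) (x : 'rV[L]_n) : L :=
  \sum_(i < n) (a i)%:A * (x 0 i) ^+ 2.

(* c is a similarity factor of q_L, i.e. q_L is isometric to c q_L:
   there is an invertible L-linear map T of L^n with q_L(x T) = c q_L(x). *)
Definition similarity_factor (F : fieldType) (L : fieldExtType F) (n : nat)
  (a : 'I_n -> F) (c : L) : Prop :=
  c != 0 /\ exists T : 'M[L]_n, T \in unitmx /\
    forall x : 'rV[L]_n, qformL a (x *m T) = c * qformL a x.

(* Main.v *)
Require Import Defs.
From HB Require Import structures.
From mathcomp Require Import all_boot all_order all_algebra all_field.
Import GRing.Theory.
Local Open Scope ring_scope.

Theorem lemma7p1 (F : fieldType) (L : fieldExtType F) (n : nat)
  (a : 'I_n -> F) (lambda : L) :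
  2%N \in [pchar F] ->
  (exists i, a i != 0) ->
  lambda != 0 ->
  similarity_factor a lambda ->
  separable 1%VS <<1%VS; lambda>>%VS \/ ~~ separable <<1%VS; lambda>>%VS fullv.
Proof.
move=> ch2 [j aj0] _ [_ [T [_ HT]]].
have two0 : (2%:R : L) = 0.
  have <- : in_alg L (2%:R : F) = 2%:R by rewrite rmorph_nat.
  by rewrite (pcharf0 ch2) rmorph0.
pose K := <<1%AS; lambda>>%AS.
case: (boolP (separable <<1%VS; lambda>>%VS fullv)) => [sepKL|]; last by right.
left; rewrite -adjoin_separable_eq.
apply/Derivation_separableP => D derD D1.
pose z := separable_generator K (aspacef L).
have sLKz : (aspacef L <= <<K; z>>)%VS by apply: sub_adjoin_separable_generator.
pose D' := extendDerivation z D K.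
have derD' : Derivation (aspacef L) D'.
  apply: DerivationS sLKz _; apply: extendDerivationP derD _.
  exact: separable_generatorP.
have D'l : D' lambda = D lambda by rewrite extendDerivation_id // memv_adjoin.
have Dl0 : D lambda = 0.
  pose x : 'rV[L]_n := delta_mx 0 j.
  have := HT x.
  have qx : qformL a x = (a j)%:A.
    rewrite /qformL (bigD1 j) //= big1 ?addr0 => [|i ij].
      by rewrite mxE !eqxx /= expr1n mulr1.
    by rewrite mxE (negbTE ij) andbF /= expr0n /= mulr0.
  rewrite qx => /(congr1 D').
  rewrite /qformL linear_sum /= big1 => [|i _]; last first.
    rewrite mulrC -scalerAr linearZ /= mulr1 (Derivation_exp derD') ?memvf //.
    by rewrite mulrnAl -mulr_natr two0 mulr0 scaler0.
  rewrite (Derivation_mul derD') ?memvf // [D' (_%:A)](Derivation_scalar derD') ?rpredZ ?mem1v //.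
  rewrite mulr0 addr0 D'l => /esym /eqP; rewrite mulf_eq0 => /orP[/eqP //|].
  by rewrite scaler_eq0 oner_eq0 orbF (negbTE aj0).
apply/subvP => _ /Fadjoin_polyP[p Kp ->].
rewrite memv_ker (Derivation_horner derD) ?memv_adjoin //; last first.
  exact: (polyOverSv (subv_adjoin 1%AS lambda) Kp).
rewrite Dl0 mulr0 addr0.
have -> : map_poly D p = 0.
  apply/polyP => i; rewrite coef_map coef0 /=.
  by apply/eqP; rewrite -memv_ker (subvP D1) // (polyOverP Kp).
by rewrite horner0.
Qed.
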